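(* Let $\mathcal{X},\mathcal{Y}$ be finite alphabets, let $W=W_{Y|X}$ be a channel from $\mathcal{X}$ to $\mathcal{Y}$, and let $\rho\in[1,\infty]$. For $P_0,P_1\in\Delta(\mathcal{X})$ let $Q_i(y)=\sum_{x}P_i(x)W(y|x)$. Then the SDPI coefficient $$\eta_\rho(W)=\sup_{P_0,P_1\in\Delta(\mathcal{X})}\frac{D_\rho(Q_0\|Q_1)}{D_\rho(P_0\|P_1)}$$ is achieved by binary input distributions, i.e., the supremum is unchanged when restricted to pairs $(P_0,P_1)$ supported on a common set of at most two elements of $\mathcal{X}$.
   Context: $\Delta(\mathcal{X})$ is the probability simplex on $\mathcal{X}$. Rényi divergence of order $\rho$: $D_\rho(P\|Q)=\frac{1}{\rho-1}\log\sum_x P(x)^\rho Q(x)^{1-\rho}$, with $D_1=D_{\mathrm{KL}}$ (limit $\rho\to1$) and $D_\infty(P\|Q)=\log\max_x \frac{P(x)}{Q(x)}$. *)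

(* Defs.v *)
From HB Require Import structures.
From mathcomp Require Import all_boot all_order all_algebra.
From mathcomp Require Import all_classical all_reals all_analysis.
Set Implicit Arguments. Unset Strict Implicit. Unset Printing Implicit Defensive.
Import Order.TTheory GRing.Theory Num.Theory.
Local Open Scope ring_scope.

Section Defs.
Variable R : realType.

Definition is_dist (X : finType) (P : X -> R) : Prop :=
  (forall x, 0 <= P x) /\ \sum_(x : X) P x = 1.

(* W : X -> Y -> R, W x y = W(y|x); every row is a distribution *)
Definition is_channel (X Y : finType) (W : X -> Y -> R) : Prop :=
  forall x, is_dist (W x).

Definition out_dist (X Y : finType) (W : X -> Y -> R) (P : X -> R) : Y -> R :=
  fun y => \sum_(x : X) P x * W x y.

(* Convention: 0 * anything = 0 (terms with P x = 0 are dropped); if P x > 0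
   and Q x = 0 for some x the divergence is +oo.  rho = 1 is KL, rho = +oo is
   the max-divergence.  (rho = -oo is a junk value, never used.) *)
Definition renyi_div (X : finType) (rho : \bar R) (P Q : X -> R) : \bar R :=
  if [exists x, (0 < P x) && (Q x == 0)] then +oo%E else
  match rho with
  | +oo%E => (ln (\big[Num.max/0]_(x | 0 < P x) (P x / Q x)))%:E
  | EFin r =>
      if r == 1 then (\sum_(x | 0 < P x) P x * ln (P x / Q x))%:E
      else ((r - 1)^-1 * ln (\sum_(x | 0 < P x) P x `^ r * Q x `^ (1 - r)))%:E
  | -oo%E => 0%E
  end.

Definition sdpi_ratio (X Y : finType) (rho : \bar R) (W : X -> Y -> R)
  (P0 P1 : X -> R) : \bar R :=
  (renyi_div rho (out_dist W P0) (out_dist W P1) *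
   ((fine (renyi_div rho P0 P1))^-1)%:E)%E.

Definition admissible (X : finType) (rho : \bar R) (P0 P1 : X -> R) : Prop :=
  [/\ is_dist P0, is_dist P1, (0 < renyi_div rho P0 P1)%E
    & (renyi_div rho P0 P1 < +oo)%E].

Definition sdpi_eta (X Y : finType) (rho : \bar R) (W : X -> Y -> R) : \bar R :=
  ereal_sup [set r | exists P0 P1, admissible rho P0 P1 /\ r = sdpi_ratio rho W P0 P1].

Definition binary_supported (X : finType) (P0 P1 : X -> R) : Prop :=
  exists a b : X, forall x, x != a -> x != b -> P0 x = 0 /\ P1 x = 0.

Definition sdpi_eta_binary (X Y : finType) (rho : \bar R) (W : X -> Y -> R) : \bar R :=
  ereal_sup [set r | exists P0 P1, [/\ admissible rho P0 P1,
                binary_supported P0 P1 & r = sdpi_ratio rho W P0 P1]].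
End Defs.

(* Main.v *)
Require Import Defs.
From HB Require Import structures.
From mathcomp Require Import all_boot all_order all_algebra.
From mathcomp Require Import all_classical all_reals all_analysis.
From mathcomp Require Import ring lra zify.
From Stdlib Require Import Lia.
Import Order.TTheory GRing.Theory Num.Theory.
Set Implicit Arguments. Unset Strict Implicit. Unset Printing Implicit Defensive.
Local Open Scope ring_scope.

Section Aux.
Variable R : realType.

Definition compat (T : Type) (P0 P1 : T -> R) := forall x, 0 < P0 x -> 0 < P1 x.

Lemma mul_gt0_inv (a b : R) : 0 <= a -> 0 <= b -> 0 < a * b -> 0 < a /\ 0 < b.
Proof.
move=> a0 b0 ab; split; rewrite lt0r; apply/andP; split=> //; apply/eqP=> e;
  by move: ab; rewrite e ?mul0r ?mulr0 ltxx.
Qed.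

Lemma sum_compat (I : Type) (r : seq I) (a b : I -> R) :
  (forall i, 0 <= a i) -> (forall i, 0 <= b i) -> (forall i, 0 < a i -> 0 < b i) ->
  0 < \sum_(i <- r) a i -> 0 < \sum_(i <- r) b i.
Proof.
move=> a0 b0 ab; elim: r => [|i r IH]; first by rewrite !big_nil ltxx.
rewrite !big_cons => h.
have sb : 0 <= \sum_(j <- r) b j by apply: sumr_ge0.
have [ai|ai] := ltrP 0 (a i).
  by apply: (lt_le_trans (ab _ ai)); rewrite lerDl.
have e : a i = 0 by apply/eqP; rewrite eq_le ai a0.
move: h; rewrite e add0r => /IH h; by apply: (lt_le_trans h); rewrite lerDr.
Qed.

Lemma cmpS (s a b : R) : 0 <= s -> 0 <= a -> (0 < a -> 0 < b) -> 0 < s * a -> 0 < s * b.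
Proof. by move=> s0 a0 ab /mul_gt0_inv [] // h1 /ab h2; rewrite mulr_gt0. Qed.

Section GenG.
Variable g : R -> R -> R.
Hypothesis ghom : forall k a b, 0 <= k -> 0 <= a -> 0 <= b -> g (k * a) (k * b) = k * g a b.
Hypothesis gsub : forall a b a' b', 0 <= a -> 0 <= b -> 0 <= a' -> 0 <= b' ->
  (0 < a -> 0 < b) -> (0 < a' -> 0 < b') -> g (a + a') (b + b') <= g a b + g a' b'.

Lemma g00 : g 0 0 = 0.
Proof. by have := @ghom 0 0 0; rewrite !mul0r; apply. Qed.

Lemma gsum (I : Type) (r : seq I) (a b : I -> R) :
  (forall i, 0 <= a i) -> (forall i, 0 <= b i) -> (forall i, 0 < a i -> 0 < b i) ->
  g (\sum_(i <- r) a i) (\sum_(i <- r) b i) <= \sum_(i <- r) g (a i) (b i).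
Proof.
move=> a0 b0 ab; elim: r => [|i r IH]; first by rewrite !big_nil g00.
rewrite !big_cons; apply: le_trans; first apply: gsub => //.
- exact: sumr_ge0.
- exact: sumr_ge0.
- exact: ab.
- exact: sum_compat.
- by rewrite lerD2l.
Qed.

Definition Sg (T : finType) (P0 P1 : T -> R) := \sum_(x : T) g (P0 x) (P1 x).

Lemma Sg_ge (T : finType) (P0 P1 : T -> R) :
  (forall x, 0 <= P0 x) -> (forall x, 0 <= P1 x) -> compat P0 P1 ->
  g (\sum_x P0 x) (\sum_x P1 x) <= Sg P0 P1.
Proof. by move=> *; apply: gsum. Qed.

Lemma Sg_dpi (X Y : finType) (W : X -> Y -> R) (P0 P1 : X -> R) :
  (forall x y, 0 <= W x y) -> (forall x, \sum_y W x y = 1) ->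
  (forall x, 0 <= P0 x) -> (forall x, 0 <= P1 x) -> compat P0 P1 ->
  Sg (out_dist W P0) (out_dist W P1) <= Sg P0 P1.
Proof.
move=> W0 W1 p0 p1 c; rewrite /Sg /out_dist.
apply: (le_trans (y := \sum_y \sum_x g (P0 x * W x y) (P1 x * W x y))).
  apply: ler_sum => y _; apply: gsum => x; rewrite ?mulr_ge0 //.
  move=> /mul_gt0_inv [] // h1 h2; by rewrite mulr_gt0 // c.
rewrite exchange_big /= le_eqVlt; apply/orP; left; apply/eqP.
apply: eq_bigr => x _.
rewrite (eq_bigr (fun y => W x y * g (P0 x) (P1 x))); last first.
  by move=> y _; rewrite ![_ * W x y]mulrC ghom.
by rewrite -mulr_suml W1 mul1r.
Qed.

Lemma Sg_mix (T : finType) (a0 a1 b0 b1 : T -> R) s t :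
  0 <= s -> 0 <= t ->
  (forall x, 0 <= a0 x) -> (forall x, 0 <= a1 x) -> compat a0 a1 ->
  (forall x, 0 <= b0 x) -> (forall x, 0 <= b1 x) -> compat b0 b1 ->
  Sg (fun y => s * a0 y + t * b0 y) (fun y => s * a1 y + t * b1 y)
  <= s * Sg a0 a1 + t * Sg b0 b1.
Proof.
move=> s0 t0 A0 A1 cA B0 B1 cB; rewrite /Sg !mulr_sumr -big_split /=.
apply: ler_sum => x _; rewrite -!ghom //.
apply: gsub; rewrite ?mulr_ge0 //.
- by move=> /mul_gt0_inv [] // h1 h2; rewrite mulr_gt0 // cA.
- by move=> /mul_gt0_inv [] // h1 h2; rewrite mulr_gt0 // cB.
Qed.

End GenG.
End Aux.

Section HMax.
Variable R : realType.

Definition hq (a b : R) := if 0 < a then a / b else 0.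
Definition Mh (T : finType) (P0 P1 : T -> R) := \big[Num.max/0]_(x : T) hq (P0 x) (P1 x).

Lemma hqE a b : 0 <= a -> hq a b = a / b.
Proof.
rewrite /hq le_eqVlt => /orP [/eqP <-|->] //; by rewrite ltxx mul0r.
Qed.

Lemma hq_ge0 a b : 0 <= a -> 0 <= b -> 0 <= hq a b.
Proof. by move=> a0 b0; rewrite hqE // divr_ge0. Qed.

Lemma hqhom k a b : 0 < k -> 0 <= a -> hq (k * a) (k * b) = hq a b.
Proof.
move=> k0 a0; rewrite !hqE ?mulr_ge0 ?(ltW k0) //.
by rewrite -mulf_div divff ?mul1r // gt_eqF.
Qed.

Lemma hqsub a b a' b' : 0 <= a -> 0 <= b -> 0 <= a' -> 0 <= b' ->
  (0 < a -> 0 < b) -> (0 < a' -> 0 < b') ->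
  hq (a + a') (b + b') <= Num.max (hq a b) (hq a' b').
Proof.
move=> a0 b0 a'0 b'0 ab ab'.
set m := Num.max _ _.
have m0 : 0 <= m by rewrite le_max hq_ge0.
have key : forall u v, 0 <= u -> 0 <= v -> (0 < u -> 0 < v) -> hq u v <= m -> u <= m * v.
  move=> u v u0 v0 uv; rewrite hqE //.
  have [vp|] := ltrP 0 v; first by rewrite ler_pdivrMr.
  move=> vn; have v00 : v = 0 by apply/eqP; rewrite eq_le vn v0.
  have : ~~ (0 < u) by apply/negP => /uv; rewrite v00 ltxx.
  rewrite -leNgt => un; have -> : u = 0 by apply/eqP; rewrite eq_le un u0.
  by rewrite v00 mulr0.
have h1 : a <= m * b by apply: key => //; rewrite le_max lexx.
have h2 : a' <= m * b' by apply: key => //; rewrite le_max lexx orbT.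
have [bp|] := ltrP 0 (b + b').
  by rewrite hqE ?addr_ge0 // ler_pdivrMr // mulrDr lerD.
move=> bn; have bb : b + b' = 0 by apply/eqP; rewrite eq_le bn addr_ge0.
by rewrite bb hqE ?addr_ge0 // invr0 mulr0.
Qed.

Lemma hqsum (I : Type) (r : seq I) (a b : I -> R) :
  (forall i, 0 <= a i) -> (forall i, 0 <= b i) -> (forall i, 0 < a i -> 0 < b i) ->
  hq (\sum_(i <- r) a i) (\sum_(i <- r) b i) <= \big[Num.max/0]_(i <- r) hq (a i) (b i).
Proof.
move=> a0 b0 ab; elim: r => [|i r IH]; first by rewrite !big_nil /hq ltxx.
rewrite !big_cons; apply: le_trans; first apply: hqsub => //.
- exact: sumr_ge0.
- exact: sumr_ge0.
- exact: ab.
- exact: sum_compat.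
by rewrite ge_max !le_max lexx IH /= orbT.
Qed.

Lemma Mh_ge0 (T : finType) (P0 P1 : T -> R) : 0 <= Mh P0 P1.
Proof. exact: bigmax_ge_id. Qed.

Lemma Mh_ub (T : finType) (P0 P1 : T -> R) x : hq (P0 x) (P1 x) <= Mh P0 P1.
Proof. exact: (le_bigmax 0 (fun x => hq (P0 x) (P1 x))). Qed.

Lemma Mh_le (T : finType) (P0 P1 : T -> R) m :
  0 <= m -> (forall x, hq (P0 x) (P1 x) <= m) -> Mh P0 P1 <= m.
Proof. by move=> m0 h; apply: bigmax_le. Qed.

Lemma Mh_ge (T : finType) (P0 P1 : T -> R) :
  (forall x, 0 <= P0 x) -> (forall x, 0 <= P1 x) -> compat P0 P1 ->
  hq (\sum_x P0 x) (\sum_x P1 x) <= Mh P0 P1.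
Proof. by move=> *; apply: hqsum. Qed.

Lemma Mh_dpi (X Y : finType) (W : X -> Y -> R) (P0 P1 : X -> R) :
  (forall x y, 0 <= W x y) ->
  (forall x, 0 <= P0 x) -> (forall x, 0 <= P1 x) -> compat P0 P1 ->
  Mh (out_dist W P0) (out_dist W P1) <= Mh P0 P1.
Proof.
move=> W0 p0 p1 c; apply: Mh_le; first exact: Mh_ge0.
move=> y; rewrite /out_dist.
have := @hqsum _ (index_enum X) (fun x => P0 x * W x y) (fun x => P1 x * W x y).
move=> /(_ _ _ _) /le_trans; apply.
- by move=> x; rewrite mulr_ge0.
- by move=> x; rewrite mulr_ge0.
- by move=> x /mul_gt0_inv [] // h1 h2; rewrite mulr_gt0 // c.
apply: bigmax_le; first exact: Mh_ge0.
move=> x _; have [Wp|Wn] := ltrP 0 (W x y).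
  by rewrite ![_ * W x y]mulrC hqhom //; apply: Mh_ub.
have -> : W x y = 0 by apply/eqP; rewrite eq_le Wn W0.
by rewrite !mulr0 /hq ltxx Mh_ge0.
Qed.

Lemma Mh_mix (T : finType) (a0 a1 b0 b1 : T -> R) s t :
  0 < s -> 0 < t ->
  (forall x, 0 <= a0 x) -> (forall x, 0 <= a1 x) -> compat a0 a1 ->
  (forall x, 0 <= b0 x) -> (forall x, 0 <= b1 x) -> compat b0 b1 ->
  Mh (fun y => s * a0 y + t * b0 y) (fun y => s * a1 y + t * b1 y)
  <= Num.max (Mh a0 a1) (Mh b0 b1).
Proof.
move=> s0 t0 A0 A1 cA B0 B1 cB; apply: Mh_le; first by rewrite le_max Mh_ge0.
move=> x; apply: le_trans; first apply: hqsub; rewrite ?mulr_ge0 ?(ltW s0) ?(ltW t0) //.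
- by apply: cmpS; rewrite ?(ltW s0) //; apply: cA.
- by apply: cmpS; rewrite ?(ltW t0) //; apply: cB.
rewrite !hqhom // ge_max !le_max !Mh_ub /=; by rewrite orbT.
Qed.

End HMax.

Section Specific.
Variable R : realType.

Lemma eqle (x y : R) : x = y -> x <= y. Proof. by move->. Qed.

Lemma bern_ge (r t : R) : 1 < r -> 0 <= t -> 1 + r * (t - 1) <= t `^ r.
Proof.
move=> r1 t0.
have r0 : 0 < r by apply: lt_trans r1.
have q0 : 0 < r / (r - 1) by rewrite divr_gt0 // subr_gt0.
have := @conjugate_powR R t 1 r (r / (r - 1)) t0 ler01 r0 q0.
rewrite mulr1 powR1.
have -> : r^-1 + (r / (r - 1))^-1 = 1.
  by field; rewrite subr_eq0 (gt_eqF r1) (gt_eqF r0).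
move=> /(_ erefl) h.
have e : t `^ r / r + 1 / (r / (r - 1)) = (t `^ r + (r - 1)) / r.
  by field; rewrite subr_eq0 (gt_eqF r1) (gt_eqF r0).
move: h; rewrite e ler_pdivlMr // => h.
by lra.
Qed.

Lemma conc_le (e t : R) : 0 < e < 1 -> 0 <= t -> t `^ e <= e * t + (1 - e).
Proof.
move=> /andP [e0 e1] t0.
have p0 : 0 < e^-1 by rewrite invr_gt0.
have q0 : 0 < (1 - e)^-1 by rewrite invr_gt0 subr_gt0.
have := @conjugate_powR R (t `^ e) 1 (e^-1) ((1 - e)^-1) (powR_ge0 _ _) ler01 p0 q0.
rewrite (invrK e) (invrK (1 - e)) mulr1 powR1 -powRrM mulfV ?gt_eqF // powRr1 //.
have -> : e + (1 - e) = 1 by rewrite addrC subrK.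
move=> /(_ erefl) h; apply: (le_trans h).
rewrite ?mul1r ?div1r ?invrK; lra.
Qed.

Definition gR (r : R) (a b : R) := if 0 < a then a `^ r * b `^ (1 - r) else 0.
Definition gK (a b : R) := if 0 < a then a * ln (a / b) else 0.

Lemma cmpD (a b a' b' : R) : 0 <= a -> 0 <= b -> 0 <= a' -> 0 <= b' ->
  (0 < a -> 0 < b) -> (0 < a' -> 0 < b') -> 0 < a + a' -> 0 < b + b'.
Proof.
move=> a0 b0 a'0 b'0 ab ab' s0.
have [ap|an] := ltrP 0 a; first by apply: (lt_le_trans (ab ap)); rewrite lerDl.
have e : a = 0 by apply/eqP; rewrite eq_le an a0.
move: s0; rewrite e add0r => /ab' h; apply: (lt_le_trans h); by rewrite lerDr.
Qed.

Lemma gR_alt r a b : 1 < r -> 0 <= a -> 0 <= b -> (0 < a -> 0 < b) ->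
  gR r a b = b * (a / b) `^ r.
Proof.
move=> r1 a0 b0 ab; rewrite /gR.
have [ap|an] := ltrP 0 a; last first.
  have -> : a = 0 by apply/eqP; rewrite eq_le an a0.
  by rewrite mul0r powR0 ?mulr0 // gt_eqF // (lt_trans ltr01 r1).
have bp := ab ap.
rewrite powRM ?invr_ge0 // -powR_inv1 // -powRrM mulN1r.
have -> : 1 - r = 1 + - r by [].
rewrite powRD; last by rewrite (gt_eqF bp) implybT.
by rewrite powRr1 // mulrCA.
Qed.

Lemma gR_hom r k a b : 0 <= k -> 0 <= a -> 0 <= b -> gR r (k * a) (k * b) = k * gR r a b.
Proof.
move=> k0 a0 b0; rewrite /gR.
have [kp|kn] := ltrP 0 k; last first.
  have -> : k = 0 by apply/eqP; rewrite eq_le kn k0.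
  by rewrite !mul0r ltxx.
rewrite pmulr_rgt0 //; case: ifP => _; last by rewrite mulr0.
rewrite !powRM // mulrACA -powRD; last by rewrite (gt_eqF kp) implybT.
have -> : r + (1 - r) = 1 by rewrite addrC subrK.
by rewrite powRr1 // ltW.
Qed.

Lemma gR_term (r m a b : R) : 1 < r -> 0 < m -> 0 <= a -> 0 <= b -> (0 < a -> 0 < b) ->
  m `^ r * (b + r * (a / m - b)) <= b * (a / b) `^ r.
Proof.
move=> r1 m0 a0 b0 ab.
have [bp|bn] := ltrP 0 b; last first.
  have b00 : b = 0 by apply/eqP; rewrite eq_le bn b0.
  have : ~~ (0 < a) by apply/negP => /ab; rewrite b00 ltxx.
  rewrite -leNgt => an; have -> : a = 0 by apply/eqP; rewrite eq_le an a0.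
  by rewrite b00 !mul0r subr0 mulr0 addr0 mulr0.
have e : a / b = m * (a / b / m) by rewrite [m * _]mulrC divfK // gt_eqF.
rewrite e powRM ?(ltW m0) ?divr_ge0 ?(ltW m0) ?(ltW bp) //.
have := bern_ge r1 (divr_ge0 (divr_ge0 a0 (ltW bp)) (ltW m0)).
move=> /(ler_wpM2l (powR_ge0 m r)) /(ler_wpM2l (ltW bp)) h.
apply: le_trans h; apply: eqle.
by field; rewrite (gt_eqF m0) (gt_eqF bp).
Qed.

Lemma gR_sub r a b a' b' : 1 < r -> 0 <= a -> 0 <= b -> 0 <= a' -> 0 <= b' ->
  (0 < a -> 0 < b) -> (0 < a' -> 0 < b') -> gR r (a + a') (b + b') <= gR r a b + gR r a' b'.
Proof.
move=> r1 a0 b0 a'0 b'0 ab ab'.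
have r0 : r != 0 by rewrite gt_eqF // (lt_trans ltr01 r1).
rewrite !gR_alt ?addr_ge0 //; last exact: cmpD.
have R0 : 0 <= b * (a / b) `^ r + b' * (a' / b') `^ r.
  by rewrite addr_ge0 // mulr_ge0 // powR_ge0.
have [Tp|Tn] := ltrP 0 (b + b'); last first.
  have -> : b + b' = 0 by apply/eqP; rewrite eq_le Tn addr_ge0.
  by rewrite mul0r.
have [sp|sn] := ltrP 0 (a + a'); last first.
  have -> : a + a' = 0 by apply/eqP; rewrite eq_le sn addr_ge0.
  by rewrite mul0r powR0 // mulr0.
set m := (a + a') / (b + b').
have m0 : 0 < m by rewrite divr_gt0.
have h := lerD (gR_term r1 m0 a0 b0 ab) (gR_term r1 m0 a'0 b'0 ab').
apply: le_trans h; apply: eqle.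
rewrite -mulrDr.
have -> : b + r * (a / m - b) + (b' + r * (a' / m - b')) = (b + b') + r * ((a + a') / m - (b + b')).
  by field; rewrite (gt_eqF m0).
have -> : (a + a') / m = b + b'.
  by rewrite /m invf_div mulrC divfK // gt_eqF.
by rewrite subrr mulr0 addr0 mulrC.
Qed.

Lemma gK_hom k a b : 0 <= k -> 0 <= a -> 0 <= b -> gK (k * a) (k * b) = k * gK a b.
Proof.
move=> k0 a0 b0; rewrite /gK.
have [kp|kn] := ltrP 0 k; last first.
  have -> : k = 0 by apply/eqP; rewrite eq_le kn k0.
  by rewrite !mul0r ltxx.
rewrite pmulr_rgt0 //; case: ifP => _; last by rewrite mulr0.
by rewrite -mulf_div divff ?mul1r ?gt_eqF // mulrA.
Qed.

Lemma gK_term (m a b : R) : 0 < m -> 0 <= a -> 0 <= b -> (0 < a -> 0 < b) ->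
  a * ln m + a - b * m <= gK a b.
Proof.
move=> m0 a0 b0 ab; rewrite /gK.
have [ap|an] := ltrP 0 a; last first.
  have -> : a = 0 by apply/eqP; rewrite eq_le an a0.
  by rewrite mul0r add0r subr_le0 mulr_ge0 // ltW.
have bp := ab ap.
have y0 : 0 < b * m / a by rewrite divr_gt0 // mulr_gt0.
have hy : ln (b * m / a) <= b * m / a - 1.
  have := @le_ln1Dx R (b * m / a - 1); rewrite [1 + _]addrC subrK; apply.
  by lra.
rewrite ln_div ?posrE ?mulr_gt0 // lnM ?posrE // in hy.
rewrite ln_div ?posrE //.
have : a * (ln b + ln m - ln a) <= a * (b * m / a - 1) by rewrite ler_wpM2l // ltW.
have e : a * (b * m / a - 1) = b * m - a by field; rewrite gt_eqF.
rewrite e => h.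
by lra.
Qed.

Lemma gK_sub a b a' b' : 0 <= a -> 0 <= b -> 0 <= a' -> 0 <= b' ->
  (0 < a -> 0 < b) -> (0 < a' -> 0 < b') -> gK (a + a') (b + b') <= gK a b + gK a' b'.
Proof.
move=> a0 b0 a'0 b'0 ab ab'.
have [sp|sn] := ltrP 0 (a + a'); last first.
  have e : a + a' = 0 by apply/eqP; rewrite eq_le sn addr_ge0.
  have ea : a = 0 by apply/eqP; rewrite eq_le; apply/andP; split; lra.
  have ea' : a' = 0 by apply/eqP; rewrite eq_le; apply/andP; split; lra.
  by rewrite e ea ea' /gK ltxx addr0.
have Tp : 0 < b + b' by apply: (cmpD a0 b0 a'0 b'0 ab ab' sp).
set m := (a + a') / (b + b').
have m0 : 0 < m by rewrite divr_gt0.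
have h := lerD (gK_term m0 a0 b0 ab) (gK_term m0 a'0 b'0 ab').
apply: le_trans h.
have e : (b + b') * m = a + a' by rewrite /m mulrC divfK // gt_eqF.
rewrite /gK sp -/m.
have : a * ln m + a - b * m + (a' * ln m + a' - b' * m) = (a + a') * ln m + (a + a') - (b + b') * m.
  by ring.
rewrite e => ->; by rewrite addrK.
Qed.

End Specific.

Section Split.
Variable R : realType.
Variable X : finType.

Definition mixpart (c : X -> R) (b : R) (P : X -> R) := fun x => c x * P x / b.

Lemma third (S : {set X}) (u v : X) : (3 <= #|S|)%N -> exists w, [/\ w \in S, w != u & w != v].
Proof.
move=> h.
have h1 := cardsD1 u S; have h2 := cardsD1 v (S :\ u).
have : (0 < #|S :\ u :\ v|)%N.
  move: h; rewrite h1 h2; case: (u \in S); case: (v \in S :\ u) => /=; lia.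
case/card_gt0P => w; rewrite !inE => /and3P [wv wu wS].
by exists w.
Qed.

Lemma sum_out (F : X -> R) (S : {set X}) :
  (forall x, x \notin S -> F x = 0) -> \sum_(x in S) F x = \sum_x F x.
Proof.
move=> h; rewrite big_mkcond /=; apply: eq_bigr => x _.
by case: ifP => // /negbT /h ->.
Qed.

Lemma sum2 (u v : X) (a b : R) (F : X -> R) : u != v ->
  \sum_x (if x == u then a else if x == v then b else 0) * F x = a * F u + b * F v.
Proof.
move=> uv; rewrite (bigD1 u) //= (bigD1 v) /=; last by rewrite eq_sym.
rewrite eqxx eq_sym (negbTE uv) eqxx addrA.
rewrite big1 ?addr0 // => x /andP [xu xv].
by rewrite (negbTE xu) (negbTE xv) mul0r.
Qed.

Lemma mixpart_dist (c : X -> R) b (P : X -> R) :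
  (forall x, 0 <= c x) -> 0 < b -> (forall x, 0 <= P x) -> \sum_x c x * P x = b ->
  is_dist (mixpart c b P).
Proof.
move=> c0 b0 P0 s; split.
  by move=> x; rewrite /mixpart divr_ge0 ?mulr_ge0 // ltW.
by rewrite /mixpart -mulr_suml s divff // gt_eqF.
Qed.

Lemma mixpart_compat (c : X -> R) b (P0 P1 : X -> R) :
  (forall x, 0 <= c x) -> 0 < b -> (forall x, 0 <= P0 x) -> compat P0 P1 ->
  compat (mixpart c b P0) (mixpart c b P1).
Proof.
move=> c0 b0 p0 cP x; rewrite /mixpart => h.
have h' : 0 < c x * P0 x by move: h; rewrite [_ / b]mulrC pmulr_rgt0 // invr_gt0.
apply: divr_gt0 => //; move: h'; apply: cmpS; [apply: c0 | apply: p0 | apply: cP].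
Qed.

Lemma mixpart_decomp (c : X -> R) b (P : X -> R) x : 0 < b < 1 ->
  b * mixpart c b P x + (1 - b) * mixpart (fun x => 1 - c x) (1 - b) P x = P x.
Proof.
move=> /andP [b0 b1]; rewrite /mixpart.
by field; rewrite subr_eq0 (gt_eqF b0) (gt_eqF b1).
Qed.

Lemma sum_compl (c : X -> R) b (P : X -> R) : \sum_x P x = 1 -> \sum_x c x * P x = b ->
  \sum_x (1 - c x) * P x = 1 - b.
Proof.
move=> s1 sb; rewrite (eq_bigr (fun x => P x - c x * P x)).
  by rewrite sumrB s1 sb.
by move=> x _; rewrite mulrBl mul1r.
Qed.

Definition is_split (P0 P1 c : X -> R) b :=
  [/\ forall x, 0 <= c x <= 1, 0 < b < 1, \sum_x c x * P0 x = b & \sum_x c x * P1 x = b].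

Lemma split_parts (P0 P1 c : X -> R) b : is_dist P0 -> is_dist P1 -> compat P0 P1 ->
  is_split P0 P1 c b ->
  [/\ is_dist (mixpart c b P0), is_dist (mixpart c b P1), compat (mixpart c b P0) (mixpart c b P1),
      is_dist (mixpart (fun x => 1 - c x) (1 - b) P0) &
      (is_dist (mixpart (fun x => 1 - c x) (1 - b) P1) /\
      compat (mixpart (fun x => 1 - c x) (1 - b) P0) (mixpart (fun x => 1 - c x) (1 - b) P1))].
Proof.
move=> [p0 s0] [p1 s1] cP [c01 /andP [b0 b1] e0 e1].
have c0 : forall x, 0 <= c x by move=> x; case/andP: (c01 x).
have c1 : forall x, 0 <= 1 - c x by move=> x; case/andP: (c01 x) => _; rewrite subr_ge0.
have b1' : 0 < 1 - b by rewrite subr_gt0.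
split.
- exact: mixpart_dist.
- exact: mixpart_dist.
- exact: mixpart_compat.
- by apply: mixpart_dist => //; apply: sum_compl.
split; first by apply: mixpart_dist => //; apply: sum_compl.
exact: mixpart_compat.
Qed.

Definition supp (P : X -> R) := [set x | 0 < P x].

Lemma small_binary (P0 P1 : X -> R) : is_dist P0 -> is_dist P1 -> compat P0 P1 ->
  (#|supp P1| <= 2)%N -> binary_supported P0 P1.
Proof.
move=> [p0 s0] [p1 s1] cP hS.
have zero : forall x, x \notin supp P1 -> P0 x = 0 /\ P1 x = 0.
  move=> x; rewrite inE -leNgt => h.
  have e1 : P1 x = 0 by apply/eqP; rewrite eq_le h p1.
  split=> //; apply/eqP; rewrite eq_le p0 andbT leNgt; apply/negP => /cP.
  by rewrite e1 ltxx.
have [a Sa] : exists a, a \in supp P1.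
  case: (set_0Vmem (supp P1)) => [e|[a Sa]]; last by exists a.
  have : \sum_x P1 x = 0.
    by rewrite big1 // => x _; have [] := zero x; [rewrite e inE | ].
  by rewrite s1 => /eqP; rewrite oner_eq0.
have h1 := cardsD1 a (supp P1).
case: (set_0Vmem (supp P1 :\ a)) => [e|[b Sb]].
  exists a, a => x xa _; apply: zero; apply/negP => Sx.
  have : x \in supp P1 :\ a by rewrite in_setD1 xa Sx.
  by rewrite e inE.
exists a, b => x xa xb; apply: zero; apply/negP => Sx.
have h2 := cardsD1 b (supp P1 :\ a).
have : x \in supp P1 :\ a :\ b by rewrite !in_setD1 xa xb Sx.
move: hS; rewrite h1 Sa h2 Sb /= => hS.
have : #|supp P1 :\ a :\ b| = 0%N by lia.
by move/eqP; rewrite cards_eq0 => /eqP ->; rewrite inE.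
Qed.

End Split.

Section Split2.
Variable R : realType.
Variable X : finType.

Lemma out_supp (P0 P1 : X -> R) : is_dist P0 -> is_dist P1 -> compat P0 P1 ->
  forall x, x \notin supp P1 -> P0 x = 0 /\ P1 x = 0.
Proof.
move=> [p0 s0] [p1 s1] cP x; rewrite inE -leNgt => h.
have e1 : P1 x = 0 by apply/eqP; rewrite eq_le h p1.
split=> //; apply/eqP; rewrite eq_le p0 andbT leNgt; apply/negP => /cP.
by rewrite e1 ltxx.
Qed.

Lemma pos_div (a b : R) : 0 < b -> 0 < a / b -> 0 < a.
Proof. by move=> b0; rewrite pmulr_lgt0 // invr_gt0. Qed.

Lemma core_split (P0 P1 : X -> R) (u v w : X) (cu : R) :
  is_dist P0 -> is_dist P1 -> compat P0 P1 ->
  u != v -> w != u -> w != v -> u \in supp P1 -> v \in supp P1 -> w \in supp P1 ->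
  0 <= cu <= 1 -> cu * (P0 u - P1 u) + (P0 v - P1 v) = 0 ->
  exists c b, [/\ is_split P0 P1 c b, (#|supp (mixpart c b P1)| < #|supp P1|)%N &
     (#|supp (mixpart (fun x => (1 - c x)%R) (1 - b)%R P1)| < #|supp P1|)%N].
Proof.
move=> d0 d1 cP uv wu wv Su Sv Sw /andP [cu0 cu1] bal.
have [p0 s0] := d0; have [p1 s1] := d1.
pose c := fun x => if x == u then cu else if x == v then 1 else 0.
have sc : forall F : X -> R, \sum_x c x * F x = cu * F u + 1 * F v.
  by move=> F; rewrite /c sum2.
pose b := cu * P1 u + P1 v.
have c01 : forall x, 0 <= c x <= 1.
  by move=> x; rewrite /c; case: ifP => _; [rewrite cu0 cu1 | case: ifP => _; rewrite ?ler01 ?lexx].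
have pv : 0 < P1 v by move: Sv; rewrite inE.
have pw : 0 < P1 w by move: Sw; rewrite inE.
have b0 : 0 < b by rewrite /b ltr_wpDl // mulr_ge0.
have sb1 : \sum_x c x * P1 x = b by rewrite sc mul1r.
have sb0 : \sum_x c x * P0 x = b by rewrite sc mul1r /b; lra.
have b1 : b < 1.
  have e := sum_compl s1 sb1.
  have : P1 w <= \sum_x (1 - c x) * P1 x.
    rewrite (bigD1 w) //= {1}/c (negbTE wu) (negbTE wv) subr0 mul1r lerDl.
    apply: sumr_ge0 => x _; rewrite mulr_ge0 //; case/andP: (c01 x) => _; by rewrite subr_ge0.
  rewrite e => h; lra.
have bb : 0 < b < 1 by rewrite b0 b1.
exists c, b; split.
- by split.
- have sub : supp (mixpart c b P1) \subset [set u; v].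
    apply/fintype.subsetP => x; rewrite !inE /mixpart => /(pos_div b0).
    rewrite /c; case: (x == u) => //; case: (x == v) => //; by rewrite mul0r ltxx.
  apply: (leq_ltn_trans (subset_leq_card sub)).
  rewrite cards2 uv.
  have h1 := cardsD1 v (supp P1); have h2 := cardsD1 u (supp P1 :\ v).
  have h3 : w \in supp P1 :\ v :\ u by rewrite !in_setD1 wu wv Sw.
  have h4 : u \in supp P1 :\ v by rewrite in_setD1 uv Su.
  have h5 : (0 < #|supp P1 :\ v :\ u|)%N by apply/card_gt0P; exists w.
  by rewrite h1 Sv add1n h2 h4 add1n !ltnS.
- have sub : supp (mixpart (fun x => 1 - c x) (1 - b) P1) \subset supp P1 :\ v.
    apply/fintype.subsetP => x; rewrite !inE /mixpart .
    have b1' : 0 < 1 - b by rewrite subr_gt0.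
    move=> /(pos_div b1') h.
    have [h1 h2] : 0 < 1 - c x /\ 0 < P1 x.
      apply: mul_gt0_inv => //; case/andP: (c01 x) => _; by rewrite subr_ge0.
    rewrite h2 andbT; apply/negP => /eqP xv; move: h1; rewrite xv /c eqxx.
    by rewrite eq_sym (negbTE uv) subrr ltxx.
  apply: (leq_ltn_trans (subset_leq_card sub)).
  by rewrite (cardsD1 v (supp P1)) Sv add1n ltnS.
Qed.

End Split2.

Section Split3.
Variable R : realType.
Variable X : finType.

Lemma exists_split (P0 P1 : X -> R) :
  is_dist P0 -> is_dist P1 -> compat P0 P1 -> (3 <= #|supp P1|)%N ->
  exists c b, [/\ is_split P0 P1 c b, (#|supp (mixpart c b P1)| < #|supp P1|)%N &
     (#|supp (mixpart (fun x => (1 - c x)%R) (1 - b)%R P1)| < #|supp P1|)%N].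
Proof.
move=> d0 d1 cP h3.
have zero := out_supp d0 d1 cP.
have [p0 s0] := d0; have [p1 s1] := d1.
have sd : \sum_x (P0 x - P1 x) = 0 by rewrite sumrB s0 s1 subrr.
have [a Sa] : exists a, a \in supp P1.
  by apply/card_gt0P; apply: leq_trans h3.
have [u /andP [Su hu]] : exists u, (u \in supp P1) && (P0 u <= P1 u).
  case: (boolP [exists u, (u \in supp P1) && (P0 u <= P1 u)]) => [/existsP //|].
  rewrite negb_exists => /forallP H; exfalso.
  have dpos : forall x, 0 <= P0 x - P1 x.
    move=> x; case: (boolP (x \in supp P1)) => Sx.
      by move: (H x); rewrite Sx /= -ltNge subr_ge0 => /ltW.
    by have [-> ->] := zero x Sx; rewrite subrr.
  have : P0 a - P1 a <= \sum_x (P0 x - P1 x).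
    by rewrite (bigD1 a) //= lerDl sumr_ge0.
  have : P1 a < P0 a by move: (H a); rewrite Sa /= -ltNge.
  rewrite sd; lra.
have [w [Sw wu _]] := third u u h3.
have [v /and3P [Sv vu hv]] : exists v, [&& v \in supp P1, v != u & P1 v <= P0 v].
  case: (boolP [exists v, [&& v \in supp P1, v != u & P1 v <= P0 v]]) => [/existsP //|].
  rewrite negb_exists => /forallP H; exfalso.
  have dneg : forall x, x != u -> P0 x - P1 x <= 0.
    move=> x xu; case: (boolP (x \in supp P1)) => Sx.
      by move: (H x); rewrite Sx xu /= -ltNge subr_le0 => /ltW.
    by have [-> ->] := zero x Sx; rewrite subrr.
  have hw : P0 w < P1 w by move: (H w); rewrite Sw wu /= -ltNge.
  have : \sum_x (P0 x - P1 x) <= (P0 u - P1 u) + (P0 w - P1 w).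
    rewrite (bigD1 u) //= (bigD1 w) //= addrA gerDl.
    by apply: sumr_le0 => x /andP [xu _]; apply: dneg.
  rewrite sd; lra.
have [w2 [Sw2 w2u w2v]] := third u v h3.
have uv : u != v by rewrite eq_sym.
set du := P1 u - P0 u; set dv := P0 v - P1 v.
have du0 : 0 <= du by rewrite /du subr_ge0.
have dv0 : 0 <= dv by rewrite /dv subr_ge0.
case: (leP dv du) => h.
  have [dup|dun] := ltrP 0 du.
    apply: (@core_split _ _ P0 P1 u v w2 (dv / du)) => //.
      by rewrite divr_ge0 //= ler_pdivrMr // mul1r.
    rewrite -/dv; have -> : P0 u - P1 u = - du by rewrite /du opprB.
    by rewrite mulrN divfK ?gt_eqF // addNr.
  have du00 : du = 0 by apply/eqP; rewrite eq_le dun du0.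
  have dv00 : dv = 0 by apply/eqP; rewrite eq_le dv0 -du00 h.
  apply: (@core_split _ _ P0 P1 u v w2 0) => //; first by rewrite lexx ler01.
  by rewrite mul0r add0r -/dv dv00.
have dvp : 0 < dv by apply: le_lt_trans h.
apply: (@core_split _ _ P0 P1 v u w2 (du / dv)) => //.
- by rewrite divr_ge0 //= ler_pdivrMr // mul1r ltW.
- rewrite -/dv; have -> : P0 u - P1 u = - du by rewrite /du opprB.
  by rewrite divfK ?gt_eqF // addrN.
Qed.

Lemma split_ind (Phi : (X -> R) -> (X -> R) -> Prop) :
  (forall P0 P1, is_dist P0 -> is_dist P1 -> compat P0 P1 -> binary_supported P0 P1 -> Phi P0 P1) ->
  (forall P0 P1 c b, is_dist P0 -> is_dist P1 -> compat P0 P1 -> is_split P0 P1 c b ->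
     Phi (mixpart c b P0) (mixpart c b P1) ->
     Phi (mixpart (fun x => 1 - c x) (1 - b) P0) (mixpart (fun x => 1 - c x) (1 - b) P1) ->
     Phi P0 P1) ->
  forall P0 P1, is_dist P0 -> is_dist P1 -> compat P0 P1 -> Phi P0 P1.
Proof.
move=> base step.
suff H : forall n P0 P1, (#|supp P1| < n)%N -> is_dist P0 -> is_dist P1 -> compat P0 P1 -> Phi P0 P1.
  by move=> P0 P1; apply: (H (#|supp P1|).+1).
elim=> [//|n IH] P0 P1 hn d0 d1 cP.
case: (leqP #|supp P1| 2) => h2.
  by apply: base => //; apply: small_binary.
have [c [b [sp hA hA']]] := exists_split d0 d1 cP h2.
have [dA0 dA1 cA dA'0 [dA'1 cA']] := split_parts d0 d1 cP sp.
apply: (step P0 P1 c b) => //; apply: IH => //.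
- by apply: leq_trans hA _; rewrite -ltnS.
- by apply: leq_trans hA' _; rewrite -ltnS.
Qed.

End Split3.

Section Div.
Variable R : realType.

Definition dvr (rho : \bar R) (T : finType) (P0 P1 : T -> R) : R :=
  match rho with
  | +oo%E => ln (Mh P0 P1)
  | EFin r => if r == 1 then Sg (@gK R) P0 P1 else (r - 1)^-1 * ln (Sg (gR r) P0 P1)
  | -oo%E => 0
  end.

Lemma renyiE (rho : \bar R) (T : finType) (P0 P1 : T -> R) :
  (forall x, 0 <= P1 x) -> compat P0 P1 -> renyi_div rho P0 P1 = (dvr rho P0 P1)%:E.
Proof.
move=> p1 cP; rewrite /renyi_div.
have -> : [exists x, (0 < P0 x) && (P1 x == 0)] = false.
  apply/negbTE; rewrite negb_exists; apply/forallP => x; apply/negP => /andP [/cP h /eqP e].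
  by move: h; rewrite e ltxx.
case: rho => [r| |] //=.
  case: ifP => _; first by rewrite /Sg big_mkcond.
  by rewrite /Sg big_mkcond.
by rewrite /Mh bigmax_mkcond.
Qed.

Lemma out_dist_dist (X Y : finType) (W : X -> Y -> R) (P : X -> R) :
  is_channel W -> is_dist P -> is_dist (out_dist W P).
Proof.
move=> hW [p0 s0]; split.
  by move=> y; rewrite /out_dist sumr_ge0 // => x _; rewrite mulr_ge0 //; case: (hW x).
rewrite /out_dist exchange_big /= -s0; apply: eq_bigr => x _.
by rewrite -mulr_sumr; case: (hW x) => _ ->; rewrite mulr1.
Qed.

Lemma out_compat (X Y : finType) (W : X -> Y -> R) (P0 P1 : X -> R) :
  is_channel W -> (forall x, 0 <= P0 x) -> (forall x, 0 <= P1 x) -> compat P0 P1 ->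
  compat (out_dist W P0) (out_dist W P1).
Proof.
move=> hW p0 p1 cP y; rewrite /out_dist.
have W0 : forall x, 0 <= W x y by move=> x; case: (hW x).
apply: sum_compat => x; rewrite ?mulr_ge0 //.
rewrite ![_ * W x y]mulrC; apply: cmpS => //; exact: cP.
Qed.

Lemma out_lin (X Y : finType) (W : X -> Y -> R) (P A B : X -> R) s t :
  (forall x, P x = s * A x + t * B x) ->
  out_dist W P = (fun y => s * out_dist W A y + t * out_dist W B y).
Proof.
move=> hP; apply/funext => y; rewrite /out_dist !mulr_sumr -big_split /=.
by apply: eq_bigr => x _; rewrite hP mulrDl !mulrA.
Qed.

Lemma conc_mix (b e x y : R) : 0 <= b <= 1 -> 0 <= e <= 1 -> 0 < x -> 0 < y ->
  b * x `^ e + (1 - b) * y `^ e <= (b * x + (1 - b) * y) `^ e.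
Proof.
move=> /andP [b0 b1] /andP [e0 e1] x0 y0.
have b1' : 0 <= 1 - b by rewrite subr_ge0.
have [e00|ep] := eqVneq e 0.
  by rewrite e00 !powRr0 !mulr1 subrKC.
have [e11|en] := eqVneq e 1.
  have x0' := ltW x0; have y0' := ltW y0.
  have s0 : 0 <= b * x + (1 - b) * y by rewrite addr_ge0 // mulr_ge0.
  by rewrite e11 !powRr1.
have ee : 0 < e < 1 by rewrite lt_neqAle eq_sym ep e0 lt_neqAle en e1.
set m := b * x + (1 - b) * y.
have m0 : 0 < m.
  rewrite /m; have [bp|bn] := ltrP 0 b.
    by rewrite ltr_pwDl ?mulr_gt0 // mulr_ge0 // ltW.
  have -> : b = 0 by apply/eqP; rewrite eq_le bn b0.
  by rewrite mul0r add0r subr0 mul1r.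
have key : forall z, 0 < z -> z `^ e <= m `^ e * (e * (z / m) + (1 - e)).
  move=> z z0.
  have hz : z `^ e = m `^ e * (z / m) `^ e.
    rewrite -powRM ?(ltW m0) ?divr_ge0 ?(ltW z0) ?(ltW m0) //.
    by rewrite mulrC divfK // gt_eqF.
  rewrite hz; apply: ler_wpM2l; first exact: powR_ge0.
  by apply: conc_le => //; rewrite divr_ge0 // ltW.
apply: le_trans; first apply: lerD; first apply: (ler_wpM2l b0 (key x x0)).
  apply: (ler_wpM2l b1' (key y y0)).
apply: eqle.
have e2 : b * (m `^ e * (e * (x / m) + (1 - e))) + (1 - b) * (m `^ e * (e * (y / m) + (1 - e)))
   = m `^ e * (e * ((b * x + (1 - b) * y) / m) + (1 - e)).
  by field; rewrite gt_eqF.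
by rewrite e2 -/m divff ?gt_eqF // mulr1 subrKC mulr1.
Qed.

End Div.

Section GenSplit.
Variable R : realType.
Variable X : finType.
Variable g : R -> R -> R.
Hypothesis ghom : forall k a b, 0 <= k -> 0 <= a -> 0 <= b -> g (k * a) (k * b) = k * g a b.

Lemma Sg_split (P0 P1 c : X -> R) b : (forall x, 0 <= P0 x) -> (forall x, 0 <= P1 x) ->
  is_split P0 P1 c b ->
  Sg g P0 P1 = b * Sg g (mixpart c b P0) (mixpart c b P1) +
    (1 - b) * Sg g (mixpart (fun x => 1 - c x) (1 - b) P0) (mixpart (fun x => 1 - c x) (1 - b) P1).
Proof.
move=> p0 p1 [c01 /andP [b0 b1] _ _].
have b1' : 0 < 1 - b by rewrite subr_gt0.
rewrite /Sg !mulr_sumr -big_split /=; apply: eq_bigr => x _.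
have [c0 c1] : 0 <= c x /\ 0 <= 1 - c x by case/andP: (c01 x) => h1 h2; rewrite subr_ge0.
rewrite /mixpart ![_ * P0 x / _]mulrAC ![_ * P1 x / _]mulrAC !ghom ?divr_ge0 ?(ltW b0) ?(ltW b1') ?p0 ?p1 //.
by field; rewrite subr_eq0 (gt_eqF b0) (gt_eqF b1).
Qed.

End GenSplit.

Section MhSplit.
Variable R : realType.
Variable X : finType.

Lemma Mh_part_le (P0 P1 c : X -> R) b : (forall x, 0 <= c x) -> 0 < b -> (forall x, 0 <= P0 x) ->
  Mh (mixpart c b P0) (mixpart c b P1) <= Mh P0 P1.
Proof.
move=> c0 b0 p0; apply: Mh_le; first exact: Mh_ge0.
move=> x; rewrite /mixpart ![_ * _ / b]mulrAC.
have [cp|cn] := ltrP 0 (c x / b).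
  by rewrite hqhom //; apply: Mh_ub.
have -> : c x / b = 0 by apply/eqP; rewrite eq_le cn divr_ge0 // ltW.
by rewrite !mul0r /hq ltxx Mh_ge0.
Qed.

Lemma Mh_le_parts (P0 P1 c : X -> R) b : (forall x, 0 <= P0 x) -> is_split P0 P1 c b ->
  Mh P0 P1 <= Num.max (Mh (mixpart c b P0) (mixpart c b P1))
     (Mh (mixpart (fun x => 1 - c x) (1 - b) P0) (mixpart (fun x => 1 - c x) (1 - b) P1)).
Proof.
move=> p0 [c01 /andP [b0 b1] _ _].
have b1' : 0 < 1 - b by rewrite subr_gt0.
apply: Mh_le; first by rewrite le_max Mh_ge0.
move=> x; rewrite le_max.
have [c0 c1] : 0 <= c x /\ c x <= 1 by case/andP: (c01 x).
have [cp|cn] := ltrP 0 (c x).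
  apply/orP; left; apply: le_trans (Mh_ub _ _ x).
  by rewrite /mixpart ![_ * _ / b]mulrAC hqhom ?divr_gt0.
have cz : c x = 0 by apply/eqP; rewrite eq_le cn c0.
apply/orP; right; apply: le_trans (Mh_ub _ _ x).
by rewrite /mixpart ![_ * _ / (1 - b)]mulrAC hqhom ?divr_gt0 // cz subr0.
Qed.

End MhSplit.

Section OutMix.
Variable R : realType.
Variables X Y : finType.
Variable W : X -> Y -> R.
Hypothesis hW : is_channel W.

Notation A c b P := (mixpart c b P).
Notation A' c b P := (mixpart (fun x => 1 - c x) (1 - b) P).

Lemma out_split (P c : X -> R) b : 0 < b < 1 ->
  out_dist W P = (fun y => b * out_dist W (A c b P) y + (1 - b) * out_dist W (A' c b P) y).
Proof. by move=> bb; apply: out_lin => x; rewrite mixpart_decomp. Qed.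

Lemma Sg_out_mix (g : R -> R -> R)
  (ghom : forall k a b, 0 <= k -> 0 <= a -> 0 <= b -> g (k * a) (k * b) = k * g a b)
  (gsub : forall a b a' b', 0 <= a -> 0 <= b -> 0 <= a' -> 0 <= b' ->
     (0 < a -> 0 < b) -> (0 < a' -> 0 < b') -> g (a + a') (b + b') <= g a b + g a' b')
  (P0 P1 c : X -> R) b :
  is_dist P0 -> is_dist P1 -> compat P0 P1 -> is_split P0 P1 c b ->
  Sg g (out_dist W P0) (out_dist W P1) <=
  b * Sg g (out_dist W (A c b P0)) (out_dist W (A c b P1)) +
  (1 - b) * Sg g (out_dist W (A' c b P0)) (out_dist W (A' c b P1)).
Proof.
move=> d0 d1 cP sp.
have [dA0 dA1 cA dA'0 [dA'1 cA']] := split_parts d0 d1 cP sp.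
have [_ bb _ _] := sp.
have [b0 b1] : 0 <= b /\ 0 <= 1 - b by case/andP: bb => h1 h2; rewrite ltW // subr_ge0 ltW.
rewrite (out_split P0 c bb) (out_split P1 c bb).
apply: Sg_mix => //.
- by move=> x; case: (out_dist_dist hW dA0) => + _; apply.
- by move=> x; case: (out_dist_dist hW dA1) => + _; apply.
- by apply: out_compat => // x; [case: dA0 => + _ | case: dA1 => + _]; apply.
- by move=> x; case: (out_dist_dist hW dA'0) => + _; apply.
- by move=> x; case: (out_dist_dist hW dA'1) => + _; apply.
- by apply: out_compat => // x; [case: dA'0 => + _ | case: dA'1 => + _]; apply.
Qed.

Lemma Mh_out_mix (P0 P1 c : X -> R) b :
  is_dist P0 -> is_dist P1 -> compat P0 P1 -> is_split P0 P1 c b ->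
  Mh (out_dist W P0) (out_dist W P1) <=
  Num.max (Mh (out_dist W (A c b P0)) (out_dist W (A c b P1)))
    (Mh (out_dist W (A' c b P0)) (out_dist W (A' c b P1))).
Proof.
move=> d0 d1 cP sp.
have [dA0 dA1 cA dA'0 [dA'1 cA']] := split_parts d0 d1 cP sp.
have [_ bb _ _] := sp.
have [b0 b1] : 0 < b /\ 0 < 1 - b by case/andP: bb => h1 h2; rewrite h1 subr_gt0.
rewrite (out_split P0 c bb) (out_split P1 c bb).
apply: Mh_mix => //.
- by move=> x; case: (out_dist_dist hW dA0) => + _; apply.
- by move=> x; case: (out_dist_dist hW dA1) => + _; apply.
- by apply: out_compat => // x; [case: dA0 => + _ | case: dA1 => + _]; apply.
- by move=> x; case: (out_dist_dist hW dA'0) => + _; apply.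
- by move=> x; case: (out_dist_dist hW dA'1) => + _; apply.
- by apply: out_compat => // x; [case: dA'0 => + _ | case: dA'1 => + _]; apply.
Qed.

End OutMix.

Section Cases.
Variable R : realType.
Variables X Y : finType.
Variable W : X -> Y -> R.
Hypothesis hW : is_channel W.

Notation A c b P := (mixpart c b P).
Notation A' c b P := (mixpart (fun x => 1 - c x) (1 - b) P).

Let W0 : forall x y, 0 <= W x y. Proof. by move=> x; case: (hW x). Qed.
Let W1 : forall x, \sum_y W x y = 1. Proof. by move=> x; case: (hW x). Qed.

Lemma split_b (P0 P1 c : X -> R) b : is_split P0 P1 c b -> 0 < b /\ 0 < 1 - b.
Proof. by case=> _ /andP [h1 h2] _ _; rewrite h1 subr_gt0. Qed.

Lemma KL_ge0 (T : finType) (P0 P1 : T -> R) :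
  is_dist P0 -> is_dist P1 -> compat P0 P1 -> 0 <= Sg (@gK R) P0 P1.
Proof.
move=> [p0 s0] [p1 s1] cP; have := Sg_ge (@gK_hom R) (@gK_sub R) p0 p1 cP.
by rewrite s0 s1 /gK ltr01 divr1 ln1 mulr0.
Qed.

Lemma KL_dpi (P0 P1 : X -> R) : is_dist P0 -> is_dist P1 -> compat P0 P1 ->
  Sg (@gK R) (out_dist W P0) (out_dist W P1) <= Sg (@gK R) P0 P1.
Proof. by move=> [p0 _] [p1 _] cP; apply: Sg_dpi => //; [apply: gK_hom | apply: gK_sub]. Qed.

Lemma KL_step (P0 P1 c : X -> R) b e : is_dist P0 -> is_dist P1 -> compat P0 P1 ->
  is_split P0 P1 c b -> 0 <= e ->
  Sg (@gK R) (out_dist W (A c b P0)) (out_dist W (A c b P1)) <= e * Sg (@gK R) (A c b P0) (A c b P1) ->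
  Sg (@gK R) (out_dist W (A' c b P0)) (out_dist W (A' c b P1)) <= e * Sg (@gK R) (A' c b P0) (A' c b P1) ->
  Sg (@gK R) (out_dist W P0) (out_dist W P1) <= e * Sg (@gK R) P0 P1.
Proof.
move=> d0 d1 cP sp e0 hA hA'.
have [b0 b1] := split_b sp.
have := (Sg_out_mix hW (@gK_hom R) (@gK_sub R) d0 d1 cP sp).
move/le_trans; apply.
have [p0 _] := d0; have [p1 _] := d1.
rewrite (Sg_split (@gK_hom R) p0 p1 sp) mulrDr (mulrCA e b) (mulrCA e (1 - b)).
by apply: lerD; apply: ler_wpM2l => //; apply: ltW.
Qed.

Lemma KL_step0 (P0 P1 c : X -> R) b : is_dist P0 -> is_dist P1 ->
  is_split P0 P1 c b ->
  Sg (@gK R) (A c b P0) (A c b P1) <= 0 -> Sg (@gK R) (A' c b P0) (A' c b P1) <= 0 ->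
  Sg (@gK R) P0 P1 <= 0.
Proof.
move=> [p0 _] [p1 _] sp hA hA'; have [b0 b1] := split_b sp.
rewrite (Sg_split (@gK_hom R) p0 p1 sp).
have h1 : b * Sg (@gK R) (A c b P0) (A c b P1) <= 0 by rewrite pmulr_rle0.
have h2 : (1 - b) * Sg (@gK R) (A' c b P0) (A' c b P1) <= 0 by rewrite pmulr_rle0.
by apply: le_trans (lerD h1 h2) _; rewrite addr0.
Qed.

Lemma ln_le (x y : R) : 0 < x -> 0 < y -> x <= y -> ln x <= ln y.
Proof. by move=> x0 y0; rewrite ler_ln ?posrE. Qed.

Lemma ln_le_inv (x y : R) : 0 < x -> 0 < y -> ln x <= ln y -> x <= y.
Proof. by move=> x0 y0; rewrite ler_ln ?posrE. Qed.

Section Ren.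
Variable r : R.
Hypothesis r1 : 1 < r.
Let gRs := fun a b a' b' => @gR_sub R r a b a' b' r1.
Let gRh := @gR_hom R r.
Let k0 : 0 < (r - 1)^-1. Proof. by rewrite invr_gt0 subr_gt0. Qed.

Lemma R_ge1 (T : finType) (P0 P1 : T -> R) :
  is_dist P0 -> is_dist P1 -> compat P0 P1 -> 1 <= Sg (gR r) P0 P1.
Proof.
move=> [p0 s0] [p1 s1] cP; have := Sg_ge gRh gRs p0 p1 cP.
by rewrite s0 s1 /gR ltr01 powR1 mulr1.
Qed.

Lemma R_pos (T : finType) (P0 P1 : T -> R) :
  is_dist P0 -> is_dist P1 -> compat P0 P1 -> 0 < Sg (gR r) P0 P1.
Proof. by move=> d0 d1 cP; apply: lt_le_trans (R_ge1 d0 d1 cP); rewrite ltr01. Qed.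

Lemma R_pos_out (P0 P1 : X -> R) :
  is_dist P0 -> is_dist P1 -> compat P0 P1 -> 0 < Sg (gR r) (out_dist W P0) (out_dist W P1).
Proof.
move=> d0 d1 cP; apply: R_pos; try exact: out_dist_dist.
by have [p0 _] := d0; have [p1 _] := d1; apply: out_compat.
Qed.

Lemma R_dpi (P0 P1 : X -> R) : is_dist P0 -> is_dist P1 -> compat P0 P1 ->
  (r - 1)^-1 * ln (Sg (gR r) (out_dist W P0) (out_dist W P1)) <= (r - 1)^-1 * ln (Sg (gR r) P0 P1).
Proof.
move=> d0 d1 cP; rewrite ler_pM2l //; apply: ln_le.
- exact: R_pos_out.
- exact: R_pos.
- by have [p0 _] := d0; have [p1 _] := d1; apply: Sg_dpi.
Qed.

Lemma R_step (P0 P1 c : X -> R) b e : is_dist P0 -> is_dist P1 -> compat P0 P1 ->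
  is_split P0 P1 c b -> 0 <= e <= 1 ->
  (r - 1)^-1 * ln (Sg (gR r) (out_dist W (A c b P0)) (out_dist W (A c b P1)))
     <= e * ((r - 1)^-1 * ln (Sg (gR r) (A c b P0) (A c b P1))) ->
  (r - 1)^-1 * ln (Sg (gR r) (out_dist W (A' c b P0)) (out_dist W (A' c b P1)))
     <= e * ((r - 1)^-1 * ln (Sg (gR r) (A' c b P0) (A' c b P1))) ->
  (r - 1)^-1 * ln (Sg (gR r) (out_dist W P0) (out_dist W P1))
     <= e * ((r - 1)^-1 * ln (Sg (gR r) P0 P1)).
Proof.
move=> d0 d1 cP sp ee hA hA'.
have [b0 b1] := split_b sp.
have [dA0 dA1 cA dA'0 [dA'1 cA']] := split_parts d0 d1 cP sp.
have conv : forall Q0 Q1 : X -> R, is_dist Q0 -> is_dist Q1 -> compat Q0 Q1 ->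
    (r - 1)^-1 * ln (Sg (gR r) (out_dist W Q0) (out_dist W Q1))
     <= e * ((r - 1)^-1 * ln (Sg (gR r) Q0 Q1)) ->
    Sg (gR r) (out_dist W Q0) (out_dist W Q1) <= Sg (gR r) Q0 Q1 `^ e.
  move=> Q0 Q1 q0 q1 cQ; rewrite (mulrCA e) ler_pM2l // -ln_powR => h.
  apply: ln_le_inv => //; first exact: R_pos_out.
  by apply: powR_gt0; apply: R_pos.
have hA2 := conv _ _ dA0 dA1 cA hA.
have hA'2 := conv _ _ dA'0 dA'1 cA' hA'.
rewrite (mulrCA e) ler_pM2l // -ln_powR; apply: ln_le.
- exact: R_pos_out.
- by apply: powR_gt0; apply: R_pos.
have := Sg_out_mix hW gRh gRs d0 d1 cP sp.
move/le_trans; apply.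
apply: le_trans.
  by apply: lerD; [exact: (ler_wpM2l (ltW b0) hA2) | exact: (ler_wpM2l (ltW b1) hA'2)].
have [p0 _] := d0; have [p1 _] := d1.
rewrite (Sg_split gRh p0 p1 sp).
apply: conc_mix => //.
- by rewrite (ltW b0) -subr_ge0 (ltW b1).
- exact: R_pos.
- exact: R_pos.
Qed.

Lemma R_step0 (P0 P1 c : X -> R) b : is_dist P0 -> is_dist P1 -> compat P0 P1 ->
  is_split P0 P1 c b ->
  (r - 1)^-1 * ln (Sg (gR r) (A c b P0) (A c b P1)) <= 0 ->
  (r - 1)^-1 * ln (Sg (gR r) (A' c b P0) (A' c b P1)) <= 0 ->
  (r - 1)^-1 * ln (Sg (gR r) P0 P1) <= 0.
Proof.
move=> d0 d1 cP sp hA hA'.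
have [b0 b1] := split_b sp.
have [dA0 dA1 cA dA'0 [dA'1 cA']] := split_parts d0 d1 cP sp.
have le1 : forall Q0 Q1 : X -> R, is_dist Q0 -> is_dist Q1 -> compat Q0 Q1 ->
    (r - 1)^-1 * ln (Sg (gR r) Q0 Q1) <= 0 -> Sg (gR r) Q0 Q1 <= 1.
  move=> Q0 Q1 q0 q1 cQ; rewrite pmulr_rle0 // -ln1 => h.
  by apply: ln_le_inv => //; apply: R_pos.
have h1 := le1 _ _ dA0 dA1 cA hA; have h2 := le1 _ _ dA'0 dA'1 cA' hA'.
rewrite pmulr_rle0 //; apply: ln_le0.
have [p0 _] := d0; have [p1 _] := d1.
rewrite (Sg_split gRh p0 p1 sp).
have : b * Sg (gR r) (A c b P0) (A c b P1) <= b * 1 by apply: ler_wpM2l => //; apply: ltW.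
have : (1 - b) * Sg (gR r) (A' c b P0) (A' c b P1) <= (1 - b) * 1 by apply: ler_wpM2l => //; apply: ltW.
rewrite !mulr1; lra.
Qed.

End Ren.

Lemma M_ge1 (T : finType) (P0 P1 : T -> R) :
  is_dist P0 -> is_dist P1 -> compat P0 P1 -> 1 <= Mh P0 P1.
Proof.
move=> [p0 s0] [p1 s1] cP; have := Mh_ge p0 p1 cP.
by rewrite s0 s1 /hq ltr01 divr1.
Qed.

Lemma M_pos (T : finType) (P0 P1 : T -> R) :
  is_dist P0 -> is_dist P1 -> compat P0 P1 -> 0 < Mh P0 P1.
Proof. by move=> d0 d1 cP; apply: lt_le_trans (M_ge1 d0 d1 cP); rewrite ltr01. Qed.

Lemma M_pos_out (P0 P1 : X -> R) :
  is_dist P0 -> is_dist P1 -> compat P0 P1 -> 0 < Mh (out_dist W P0) (out_dist W P1).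
Proof.
move=> d0 d1 cP; apply: M_pos; try exact: out_dist_dist.
by have [p0 _] := d0; have [p1 _] := d1; apply: out_compat.
Qed.

Lemma M_dpi (P0 P1 : X -> R) : is_dist P0 -> is_dist P1 -> compat P0 P1 ->
  ln (Mh (out_dist W P0) (out_dist W P1)) <= ln (Mh P0 P1).
Proof.
move=> d0 d1 cP; apply: ln_le.
- exact: M_pos_out.
- exact: M_pos.
- by have [p0 _] := d0; have [p1 _] := d1; apply: Mh_dpi.
Qed.

Lemma M_step (P0 P1 c : X -> R) b e : is_dist P0 -> is_dist P1 -> compat P0 P1 ->
  is_split P0 P1 c b -> 0 <= e ->
  ln (Mh (out_dist W (A c b P0)) (out_dist W (A c b P1))) <= e * ln (Mh (A c b P0) (A c b P1)) ->
  ln (Mh (out_dist W (A' c b P0)) (out_dist W (A' c b P1))) <= e * ln (Mh (A' c b P0) (A' c b P1)) ->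
  ln (Mh (out_dist W P0) (out_dist W P1)) <= e * ln (Mh P0 P1).
Proof.
move=> d0 d1 cP sp e0 hA hA'.
have [b0 b1] := split_b sp.
have [dA0 dA1 cA dA'0 [dA'1 cA']] := split_parts d0 d1 cP sp.
have [p0 _] := d0; have [p1 _] := d1.
have [c01 _ _ _] := sp.
have c0 : forall x, 0 <= c x by move=> x; case/andP: (c01 x).
have c1 : forall x, 0 <= 1 - c x by move=> x; case/andP: (c01 x) => _; rewrite subr_ge0.
have := Mh_out_mix hW d0 d1 cP sp; rewrite le_max => /orP [h|h].
  apply: le_trans; first apply: (ln_le _ _ h).
  - exact: M_pos_out.
  - exact: M_pos_out.
  apply: (le_trans hA); apply: ler_wpM2l => //; apply: ln_le.
  - exact: M_pos.
  - exact: M_pos.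
  exact: Mh_part_le.
apply: le_trans; first apply: (ln_le _ _ h).
- exact: M_pos_out.
- exact: M_pos_out.
apply: (le_trans hA'); apply: ler_wpM2l => //; apply: ln_le.
- exact: M_pos.
- exact: M_pos.
exact: Mh_part_le.
Qed.

Lemma M_step0 (P0 P1 c : X -> R) b : is_dist P0 -> is_dist P1 -> compat P0 P1 ->
  is_split P0 P1 c b ->
  ln (Mh (A c b P0) (A c b P1)) <= 0 -> ln (Mh (A' c b P0) (A' c b P1)) <= 0 ->
  ln (Mh P0 P1) <= 0.
Proof.
move=> d0 d1 cP sp hA hA'.
have [dA0 dA1 cA dA'0 [dA'1 cA']] := split_parts d0 d1 cP sp.
have [p0 _] := d0.
have le1 : forall Q0 Q1 : X -> R, is_dist Q0 -> is_dist Q1 -> compat Q0 Q1 ->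
    ln (Mh Q0 Q1) <= 0 -> Mh Q0 Q1 <= 1.
  move=> Q0 Q1 q0 q1 cQ; rewrite -ln1 => h.
  by apply: ln_le_inv => //; apply: M_pos.
apply: ln_le0; apply: le_trans (Mh_le_parts p0 sp) _.
by rewrite ge_max (le1 _ _ dA0 dA1 cA hA) (le1 _ _ dA'0 dA'1 cA' hA').
Qed.

End Cases.

Section Generic.
Variable R : realType.

Lemma rho_cases (rho : \bar R) : (1%:E <= rho)%E ->
  rho = +oo%E \/ rho = 1%:E \/ exists r, 1 < r /\ rho = r%:E.
Proof.
case: rho => [r| |] //=; last by left.
rewrite lee_fin le_eqVlt => /orP [/eqP <-|h]; first by right; left.
by right; right; exists r.
Qed.

Lemma dvr_ge0 (rho : \bar R) (T : finType) (P0 P1 : T -> R) : (1%:E <= rho)%E ->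
  is_dist P0 -> is_dist P1 -> compat P0 P1 -> 0 <= dvr rho P0 P1.
Proof.
move=> /rho_cases [->|[->|[r [r1 ->]]]] d0 d1 cP /=.
- exact: (ln_ge0 (M_ge1 d0 d1 cP)).
- by rewrite eqxx; apply: KL_ge0.
- rewrite (gt_eqF r1); apply: mulr_ge0; first by rewrite invr_ge0 subr_ge0 ltW.
  by apply: ln_ge0; apply: R_ge1.
Qed.

Lemma dvr_dpi (rho : \bar R) (X Y : finType) (W : X -> Y -> R) (P0 P1 : X -> R) :
  is_channel W -> (1%:E <= rho)%E ->
  is_dist P0 -> is_dist P1 -> compat P0 P1 ->
  dvr rho (out_dist W P0) (out_dist W P1) <= dvr rho P0 P1.
Proof.
move=> hW /rho_cases [->|[->|[r [r1 ->]]]] d0 d1 cP /=.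
- exact: M_dpi.
- by rewrite eqxx; apply: KL_dpi.
- by rewrite (gt_eqF r1); apply: R_dpi.
Qed.

Lemma dvr_step (rho : \bar R) (X Y : finType) (W : X -> Y -> R) (P0 P1 c : X -> R) b e :
  is_channel W -> (1%:E <= rho)%E ->
  is_dist P0 -> is_dist P1 -> compat P0 P1 -> is_split P0 P1 c b -> 0 <= e <= 1 ->
  dvr rho (out_dist W (mixpart c b P0)) (out_dist W (mixpart c b P1))
     <= e * dvr rho (mixpart c b P0) (mixpart c b P1) ->
  dvr rho (out_dist W (mixpart (fun x => 1 - c x) (1 - b) P0))
          (out_dist W (mixpart (fun x => 1 - c x) (1 - b) P1))
     <= e * dvr rho (mixpart (fun x => 1 - c x) (1 - b) P0) (mixpart (fun x => 1 - c x) (1 - b) P1) ->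
  dvr rho (out_dist W P0) (out_dist W P1) <= e * dvr rho P0 P1.
Proof.
move=> hW /rho_cases [->|[->|[r [r1 ->]]]] d0 d1 cP sp /andP [e0 e1] /=.
- exact: M_step.
- by rewrite eqxx; apply: KL_step.
- by rewrite (gt_eqF r1); apply: R_step => //; rewrite e0 e1.
Qed.

Lemma dvr_step0 (rho : \bar R) (X : finType) (P0 P1 c : X -> R) b :
  (1%:E <= rho)%E ->
  is_dist P0 -> is_dist P1 -> compat P0 P1 -> is_split P0 P1 c b ->
  dvr rho (mixpart c b P0) (mixpart c b P1) <= 0 ->
  dvr rho (mixpart (fun x => 1 - c x) (1 - b) P0) (mixpart (fun x => 1 - c x) (1 - b) P1) <= 0 ->
  dvr rho P0 P1 <= 0.
Proof.
move=> /rho_cases [->|[->|[r [r1 ->]]]] d0 d1 cP sp /=.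
- exact: M_step0.
- by rewrite eqxx; apply: KL_step0.
- by rewrite (gt_eqF r1); apply: R_step0.
Qed.

End Generic.

Section Main.
Variable R : realType.
Variables X Y : finType.
Variable W : X -> Y -> R.
Hypothesis hW : is_channel W.
Variable rho : \bar R.
Hypothesis hr : (1%:E <= rho)%E.

Lemma adm_facts (P0 P1 : X -> R) : admissible rho P0 P1 ->
  [/\ is_dist P0, is_dist P1, compat P0 P1 & 0 < dvr rho P0 P1].
Proof.
case=> d0 d1 pos fin.
have [p1 _] := d1.
have cP : compat P0 P1.
  move=> x hx; rewrite lt_neqAle p1 andbT eq_sym; apply/negP => /eqP e.
  have ex : [exists x, (0 < P0 x) && (P1 x == 0)] by apply/existsP; exists x; rewrite hx e eqxx.
  by move: fin; rewrite /renyi_div ex ltxx.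
split=> //; by move: pos; rewrite renyiE // lte_fin.
Qed.

Lemma ratioE (P0 P1 : X -> R) : is_dist P0 -> is_dist P1 -> compat P0 P1 ->
  sdpi_ratio rho W P0 P1 = (dvr rho (out_dist W P0) (out_dist W P1) / dvr rho P0 P1)%:E.
Proof.
move=> d0 d1 cP.
have [p0 _] := d0; have [p1 _] := d1.
have [q1 _] := out_dist_dist hW d1.
rewrite /sdpi_ratio (renyiE rho q1 (out_compat hW p0 p1 cP)) (renyiE rho p1 cP) /=.
by rewrite -EFinM.
Qed.

Lemma dvr_out_ge0 (P0 P1 : X -> R) : is_dist P0 -> is_dist P1 -> compat P0 P1 ->
  0 <= dvr rho (out_dist W P0) (out_dist W P1).
Proof.
move=> d0 d1 cP; have [p0 _] := d0; have [p1 _] := d1.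
apply: dvr_ge0 => //; try exact: out_dist_dist.
exact: out_compat.
Qed.

Lemma bin_mem (P0 P1 : X -> R) : is_dist P0 -> is_dist P1 -> compat P0 P1 ->
  binary_supported P0 P1 -> 0 < dvr rho P0 P1 ->
  [set r | exists P0 P1, [/\ admissible rho P0 P1, binary_supported P0 P1 &
     r = sdpi_ratio rho W P0 P1]]%classic (sdpi_ratio rho W P0 P1).
Proof.
move=> d0 d1 cP bs pos; exists P0, P1; split=> //.
have [p1 _] := d1.
split=> //; rewrite renyiE // ?lte_fin //.
by rewrite ltry.
Qed.

Lemma main_le : (sdpi_eta rho W <= sdpi_eta_binary rho W)%E.
Proof.
apply: ge_ereal_sup => z [P0 [P1 [adm ->]]].
have [d0 d1 cP pos] := adm_facts adm.
rewrite (ratioE d0 d1 cP).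
set E := sdpi_eta_binary rho W.
have ub : forall A0 A1 : X -> R, is_dist A0 -> is_dist A1 -> compat A0 A1 ->
    binary_supported A0 A1 -> 0 < dvr rho A0 A1 -> (sdpi_ratio rho W A0 A1 <= E)%E.
  move=> A0 A1 a0 a1 cA bA pA; apply: ereal_sup_ubound; exact: bin_mem.
case E_eq : E => [e| |]; last first.
- (* E = -oo : no binary admissible pair *)
  have Phi : forall A0 A1 : X -> R, is_dist A0 -> is_dist A1 -> compat A0 A1 -> dvr rho A0 A1 <= 0.
    apply: split_ind.
      move=> A0 A1 a0 a1 cA bA; rewrite leNgt; apply/negP => pA.
      by have := ub _ _ a0 a1 cA bA pA; rewrite E_eq (ratioE a0 a1 cA) leeNy_eq.
    move=> A0 A1 c b a0 a1 cA sp h1 h2; exact: (dvr_step0 hr a0 a1 cA sp h1 h2).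
  by have := Phi _ _ d0 d1 cP; rewrite leNgt pos.
- by rewrite leey.
have [z0 [B0 [B1 [admB bB _]]]] : exists z, [set r | exists P0 P1, [/\ admissible rho P0 P1,
     binary_supported P0 P1 & r = sdpi_ratio rho W P0 P1]]%classic z.
  apply/not_existsP => hne.
  have : E = -oo%E.
    apply/ereal_sup_ninfty => w Sw; by exfalso; apply: (hne w).
  by rewrite E_eq.
have [b0 b1 cB posB] := adm_facts admB.
have e0 : 0 <= e.
  have := ub _ _ b0 b1 cB bB posB; rewrite E_eq (ratioE b0 b1 cB) lee_fin.
  move=> h; apply: le_trans h; apply: divr_ge0; [exact: dvr_out_ge0 | exact: ltW].
rewrite lee_fin.
have [e1|e1] := leP 1 e.
  apply: le_trans e1; rewrite ler_pdivrMr // mul1r.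
  exact: dvr_dpi.
have Phi : forall A0 A1 : X -> R, is_dist A0 -> is_dist A1 -> compat A0 A1 ->
    dvr rho (out_dist W A0) (out_dist W A1) <= e * dvr rho A0 A1.
  apply: split_ind.
    move=> A0 A1 a0 a1 cA bA.
    have [pA|nA] := ltrP 0 (dvr rho A0 A1).
      have := ub _ _ a0 a1 cA bA pA; rewrite E_eq (ratioE a0 a1 cA) lee_fin.
      by rewrite ler_pdivrMr // mulrC.
    have zz : dvr rho A0 A1 = 0 by apply/eqP; rewrite eq_le nA dvr_ge0.
    by rewrite zz mulr0 -zz; apply: dvr_dpi.
  move=> A0 A1 c b a0 a1 cA sp h1 h2.
  by apply: (dvr_step hW hr a0 a1 cA sp) => //; rewrite e0 ltW.
by rewrite ler_pdivrMr //; apply: Phi.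
Qed.

End Main.

Unset Implicit Arguments.

Theorem theorem4p2 (R : realType) (X Y : finType) (W : X -> Y -> R)
  (rho : \bar R) :
  is_channel W -> (1%:E <= rho)%E ->
  sdpi_eta rho W = sdpi_eta_binary rho W.
Proof.
move=> hW hr; apply/eqP; rewrite eq_le; apply/andP; split.
  exact: main_le.
apply: ereal_sup_le => z [P0 [P1 [adm _ ->]]].
by exists P0, P1.
Qed.
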